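(* Let $n\ge4$ and consider the cycle graph $C_n$. For $i\in[n]$ let $\mathrm{Dec}_i^n:=i(i-1)\cdots 1\,n(n-1)\cdots(i+1)$. (1) If $i\le n-2$, then for every $j\in[n]$: $B(j,\mathrm{Dec}_i^n,C_n)=j$ if $j\le n-2$; $B(n-1,\mathrm{Dec}_i^n,C_n)=i(i-1)\cdots1\,n(n-1)$; $B(n,\mathrm{Dec}_i^n,C_n)=i(i-1)\cdots1\,n$. Consequently the number of $C_n$-friendship parking functions with outcome $\mathrm{Dec}_i^n$ is $(i+1)(i+2)$. (2) For $i=n-1$: $B(j,\mathrm{Dec}_{n-1}^n,C_n)=j$ for all $j\in[n-1]$, and $B(n,\mathrm{Dec}_{n-1}^n,C_n)=(n-1)\cdots1\,n$. Consequently the number of $C_n$-friendship parking functions with outcome $\mathrm{Dec}_{n-1}^n$ is $n$. (3) For $i=n$: $B(j,\mathrm{Dec}_n^n,C_n)=j$ for all $j\in[n]$, and the number of $C_n$-friendship parking functions with outcome $\mathrm{Dec}_n^n$ is $1$.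
   Context: $C_n$ ($n\ge3$) is the cycle graph with vertex set $[n]$ and edges $\{i,i+1\}$ for $i\in[n-1]$ and $\{n,1\}$. Permutations are in one-line notation. Friendship parking process for a graph $G$ on $[n]$ and a parking preference $p\in[n]^n$: cars $1,\dots,n$ enter in order into spots $1,\dots,n$ (initially empty); spot $k$ is available for car $i$ if it is unoccupied when $i$ enters and each of spots $k-1,k+1$ is unoccupied or occupied by a car adjacent to $i$ in $G$ (spots $0,n+1$ count as unoccupied); car $i$ parks in the first available spot $k\ge p_i$, failing otherwise. $p$ is a $G$-friendship parking function if all cars park; its outcome is the permutation $\pi$ with $\pi_k$ the car in spot $k$ at the end. Blockers: for a permutation $\pi$ that is a Hamiltonian path of $G$ (i.e. $\{\pi_k,\pi_{k+1}\}$ is an edge for all $k$) and $i\in[n]$, $j=\pi_k$ is a blocker for $i$ if (1) $j\le i$, or (2) $j>i$ and some $\ell\in\{\pi_{k-1},\pi_{k+1}\}$ satisfies $\ell<i$ and $\ell$ not adjacent to $i$ in $G$. The blocking sequence $B(i,\pi,G)$ is the longest contiguous block of $\pi$ ending at $i$ consisting of blockers for $i$. *)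

(* Defs.v *)
From mathcomp Require Import all_boot.
Set Implicit Arguments. Unset Strict Implicit. Unset Printing Implicit Defensive.

Definition cycle_graph (n : nat) : rel nat := fun a b =>
  [&& 1 <= a <= n, 1 <= b <= n &
      [|| b == a.+1, a == b.+1, (a == 1) && (b == n) | (a == n) && (b == 1)]].

Definition Dec (n i : nat) : seq nat := rev (iota 1 i) ++ rev (iota i.+1 (n - i)).

(* pi_k (1-based position k) *)
Definition entry (pi : seq nat) (k : nat) : nat := nth 0 pi k.-1.

Definition nbrs (pi : seq nat) (k : nat) : seq nat :=
  [seq entry pi q | q <- [:: k.-1; k.+1] & (1 <= q <= size pi)].

Definition blocker (G : rel nat) (pi : seq nat) (i k : nat) : bool :=
  let j := entry pi k in
  (j <= i) || ((i < j) && has (fun l => (l < i) && ~~ G l i) (nbrs pi k)).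

(* B(i, pi, G): the longest contiguous block of pi ending at i made of blockers for i. *)
Definition blocking_seq (i : nat) (pi : seq nat) (G : rel nat) : seq nat :=
  let p := (index i pi).+1 in
  let len := find (fun k => ~~ blocker G pi i k) (rev (iota 1 p)) in
  drop (p - len) (take p pi).

(* Friendship parking process.  A state is a seq of length n: entry k-1 is the car
   in spot k, or 0 if spot k is empty.  Spots 0 and n+1 count as unoccupied. *)
Definition occ (n : nat) (s : seq nat) (k : nat) : nat :=
  if (1 <= k <= n) then nth 0 s k.-1 else 0.

Definition available (G : rel nat) (n : nat) (s : seq nat) (i k : nat) : bool :=
  [&& 1 <= k <= n, occ n s k == 0,
      (occ n s k.-1 == 0) || G (occ n s k.-1) i &
      (occ n s k.+1 == 0) || G (occ n s k.+1) i].

(* cars i, i+1, ... with preferences prefs enter in order; None = some car fails *)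
Fixpoint run (G : rel nat) (n : nat) (prefs : seq nat) (i : nat) (s : seq nat)
  : option (seq nat) :=
  match prefs with
  | [::] => Some s
  | p :: ps =>
      match [seq k <- iota p (n.+1 - p) | available G n s i k] with
      | [::] => None
      | k :: _ => run G n ps i.+1 (set_nth 0 s k.-1 i)
      end
  end.

Definition outcome (G : rel nat) (n : nat) (prefs : seq nat) : option (seq nat) :=
  run G n prefs 1 (nseq n 0).

(* A parking preference p in [n]^n is encoded as f : 'I_n -> 'I_n with
   p_{i+1} = f i + 1. *)
Definition prefs_of (n : nat) (f : {ffun 'I_n -> 'I_n}) : seq nat :=
  [seq (val (f i)).+1 | i <- enum 'I_n].

Definition num_fpf (G : rel nat) (n : nat) (pi : seq nat) : nat :=
  #|[set f : {ffun 'I_n -> 'I_n} | outcome G n (prefs_of f) == Some pi]|.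

(* Main.v *)
Require Import Defs.
From mathcomp Require Import all_boot.
From mathcomp Require Import zify.
Set Implicit Arguments. Unset Strict Implicit. Unset Printing Implicit Defensive.

Definition St (pi : seq nat) (c : nat) := [seq (if x < c then x else 0) | x <- pi].

Lemma run_mono G n ps c s s' : run G n ps c s = Some s' ->
  forall j, nth 0 s j != 0 -> nth 0 s' j = nth 0 s j.
Proof.
elim: ps c s => [|p ps IH] c s /=; first by move=> [->].
case E: [seq k <- iota p (n.+1 - p) | available G n s c k] => [//|k r] H j hj.
have : k \in [seq k <- iota p (n.+1 - p) | available G n s c k] by rewrite E mem_head.
rewrite mem_filter => /andP[hav _].
move: hav; rewrite /available /occ => /and4P[hk hocc _ _].
rewrite hk in hocc.
have hj' : nth 0 s j = 0 -> False by move=> e; rewrite e in hj.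
rewrite (IH _ _ H j); last first.
  rewrite nth_set_nth /=; case: (j =P k.-1) => [e|_]; last by apply/eqP.
  exfalso; move: hj'; rewrite e (eqP hocc); auto.
rewrite nth_set_nth /=; case: (j =P k.-1) => // e; exfalso; move: hj'; rewrite e (eqP hocc); auto.
Qed.

Lemma St_step pi c : uniq pi -> c \in pi ->
  set_nth 0 (St pi c) (index c pi) c = St pi c.+1.
Proof.
move=> u cin.
have hlt : index c pi < size pi by rewrite index_mem.
apply: (eq_from_nth (x0 := 0)).
  by rewrite size_set_nth /St !size_map; apply/maxn_idPr.
move=> j; rewrite size_set_nth /St size_map (maxn_idPr hlt) => hj.
rewrite nth_set_nth /= !(nth_map 0) //.
case: eqP => e.
  by rewrite e nth_index // ltnSn.
have ne : nth 0 pi j != c.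
  apply/eqP => e2; apply: e; rewrite -e2 index_uniq //.
move/eqP: ne => ne; case: ifP => h1; case: ifP => h2 //; lia.
Qed.

Lemma run_step G n pi p ps c : uniq pi -> c \in pi -> c != 0 -> size pi = n ->
  run G n (p :: ps) c (St pi c) = Some pi <->
  head 0 [seq k <- iota p (n.+1 - p) | available G n (St pi c) c k] = (index c pi).+1
  /\ run G n ps c.+1 (St pi c.+1) = Some pi.
Proof.
move=> u cin c0 sz /=.
case E: [seq k <- iota p (n.+1 - p) | available G n (St pi c) c k] => [|k r] /=.
  by split => // -[].
split; last by case=> -> H /=; rewrite St_step.
move=> H.
have : k \in [seq k <- iota p (n.+1 - p) | available G n (St pi c) c k] by rewrite E mem_head.
rewrite mem_filter => /andP[hav _].
move: hav; rewrite /available /occ => /and4P[hk _ _ _].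
have := run_mono H (j := k.-1); rewrite nth_set_nth /= eqxx => /(_ c0) e.
have hidx : index c pi = k.-1.
  by rewrite -e index_uniq // sz; lia.
have hk1 : k = (index c pi).+1 by rewrite hidx; lia.
by split => //; rewrite -hidx St_step // in H.
Qed.

Definition firstav G n pi c p :=
  head 0 [seq k <- iota p (n.+1 - p) | available G n (St pi c) c k].

Lemma run_all G n pi : uniq pi -> size pi = n -> (forall x, (x \in pi) = (0 < x <= n)) ->
  forall ps c, 0 < c -> c + size ps = n.+1 ->
  run G n ps c (St pi c) = Some pi <->
  (forall t, t < size ps -> firstav G n pi (c + t) (nth 0 ps t) = (index (c + t) pi).+1).
Proof.
move=> u sz mem; elim=> [|p ps IH] c c0 hs.
  have -> : St pi c = pi.
    rewrite /St -[RHS]map_id; apply/eq_in_map => x; rewrite mem => hx.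
    rewrite /= addn0 in hs.
    have -> : x < c by lia.
    by [].
  by split.
rewrite /= in hs.
have cin : c \in pi by rewrite mem; lia.
rewrite run_step //; last by lia.
rewrite /=.
rewrite (IH c.+1) //; last by rewrite /= in hs; lia.
split.
  case=> h1 h2 [|t] ht /=; first by rewrite addn0.
  by rewrite addnS -addSn h2.
move=> H; split; first by have := H 0 isT; rewrite addn0.
by move=> t ht; rewrite addSn -addnS (H t.+1).
Qed.

Lemma St1 n pi : size pi = n -> (forall x, x \in pi -> 0 < x) -> St pi 1 = nseq n 0.
Proof.
move=> sz pos; apply: (eq_from_nth (x0 := 0)); first by rewrite /St size_map size_nseq.
move=> j; rewrite /St size_map => hj; rewrite (nth_map 0) // nth_nseq -sz hj.
by have := pos _ (mem_nth 0 hj); case: (nth 0 pi j).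
Qed.

Definition goodset G n pi (x : 'I_n) : pred 'I_n :=
  [pred y : 'I_n | firstav G n pi x.+1 y.+1 == (index x.+1 pi).+1].

Lemma num_fpf_eq G n pi : uniq pi -> size pi = n -> (forall x, (x \in pi) = (0 < x <= n)) ->
  num_fpf G n pi = foldr muln 1 [seq #|goodset G pi x| | x : 'I_n].
Proof.
move=> u sz mem; rewrite /num_fpf -card_family; apply: eq_card => f.
rewrite inE /outcome -(St1 sz); last by move=> x; rewrite mem; lia.
have hs : 1 + size (prefs_of f) = n.+1 by rewrite /prefs_of size_map size_enum_ord.
apply/eqP/familyP.
  move/(@run_all G n pi u sz mem _ 1 isT hs) => H x; rewrite /goodset inE.
  have hx : x < size (prefs_of f) by rewrite /prefs_of size_map size_enum_ord.
  have := H x hx; rewrite /prefs_of (nth_map x) ?size_enum_ord // nth_ord_enum.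
  by move=> ->.
move=> H; apply/(@run_all G n pi u sz mem _ 1 isT hs) => t.
rewrite /prefs_of size_map size_enum_ord => ht.
have := H (Ordinal ht); rewrite /goodset inE /=.
by rewrite (nth_map (Ordinal ht)) ?size_enum_ord // (nth_ord_enum (Ordinal ht) (Ordinal ht)) => /eqP.
Qed.
Lemma sum_ind n lo hi : \sum_(i < n) ((lo <= i) && (i < hi) : nat) = minn n hi - minn n lo.
Proof.
elim: n => [|n IH]; first by rewrite big_ord0; lia.
rewrite big_ord_recr /= IH; case h1: (lo <= n); case h2: (n < hi) => /=; lia.
Qed.

Lemma card_range n lo hi : lo <= hi <= n -> #|[pred y : 'I_n | lo <= y < hi]| = hi - lo.
Proof.
move=> h; rewrite -sum1_card big_mkcond /=.
rewrite (eq_bigr (fun i : 'I_n => ((lo <= i) && (i < hi) : nat))); last first.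
  by move=> i _; rewrite inE; case: (_ && _).
rewrite sum_ind; lia.
Qed.

Lemma head_filter_iota (A : pred nat) p m t : 0 < t ->
  head 0 [seq k <- iota p m | A k] = t <->
  [/\ p <= t < p + m, A t & forall k, p <= k < t -> ~~ A k].
Proof.
move=> t0; elim: m p => [|m IH] p /=.
  split; first by move=> e; rewrite -e in t0.
  by case; lia.
case: ifP => Ap /=.
  split.
    move=> <-; split => //; first lia.
    by move=> k; lia.
  case=> h1 h2 h3; apply/eqP; rewrite eqn_leq; apply/andP; split; first lia.
  case: (ltnP p t) => // lt; by have := h3 p; rewrite Ap leqnn lt => /(_ isT).
rewrite IH; split.
  case=> h1 h2 h3; split => //; first lia.
  move=> k hk; case: (k =P p) => [->|ne]; first by rewrite Ap.
  apply: h3; lia.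
case=> h1 h2 h3; have ne : t != p by apply/eqP => e; rewrite e Ap in h2.
split => //; first lia.
move=> k hk; apply: h3; lia.
Qed.

Lemma goodset_card G n pi (x : 'I_n) t lo :
  (index x.+1 pi).+1 = t -> t <= n -> 1 <= lo <= t ->
  available G n (St pi x.+1) x.+1 t ->
  (forall k, lo <= k < t -> ~~ available G n (St pi x.+1) x.+1 k) ->
  (lo = 1 \/ available G n (St pi x.+1) x.+1 lo.-1) ->
  #|goodset G pi x| = t - lo.-1.
Proof.
move=> ht tn hlo At nA hl.
rewrite -(@card_range n lo.-1 t); last lia.
apply: eq_card => y; rewrite /goodset !inE ht; apply/eqP/idP.
  rewrite /firstav head_filter_iota; last lia.
  case=> h1 h2 h3; apply/andP; split; last lia.
  case: (leqP lo.-1 y) => // lt; exfalso.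
  case: hl => [e|Al]; first lia.
  have : ~~ available G n (St pi x.+1) x.+1 lo.-1 by apply: h3; lia.
  by rewrite Al.
move=> /andP[h1 h2]; rewrite /firstav head_filter_iota; last lia.
split => //; first lia.
move=> k hk; apply: nA; lia.
Qed.
Definition dec (n i k : nat) := if k <= i then i.+1 - k else n + i.+1 - k.

Lemma size_Dec n i : i <= n -> size (Dec n i) = n.
Proof. move=> h; rewrite /Dec size_cat !size_rev !size_iota; lia. Qed.

Lemma nth_Dec n i k : i <= n -> k < n -> nth 0 (Dec n i) k = dec n i k.+1.
Proof.
move=> hi hk; rewrite /Dec /dec nth_cat size_rev size_iota.
case: ifP => h.
  rewrite (nth_rev 0 (s := iota 1 i)) ?size_iota // nth_iota; lia.
rewrite (nth_rev 0 (s := iota i.+1 (n - i))) ?size_iota; last lia.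
rewrite nth_iota; lia.
Qed.

Lemma mem_Dec n i c : i <= n -> (c \in Dec n i) = (1 <= c <= n).
Proof.
move=> hi; rewrite /Dec mem_cat !mem_rev !mem_iota.
apply/idP/idP; lia.
Qed.

Lemma uniq_Dec n i : i <= n -> uniq (Dec n i).
Proof.
move=> hi; rewrite /Dec cat_uniq !rev_uniq !iota_uniq andbT /=.
apply/hasPn => x; rewrite mem_rev mem_iota => hx.
rewrite /= mem_rev mem_iota; lia.
Qed.

Lemma dec_range n i c : i <= n -> 1 <= c <= n -> 1 <= dec n i c <= n.
Proof. move=> hi hc; rewrite /dec; case: ifP => h; lia. Qed.

Lemma dec_inv n i c : i <= n -> 1 <= c <= n -> dec n i (dec n i c) = c.
Proof.
move=> hi hc; rewrite {2}/dec; case: ifP => h; rewrite /dec; case: ifP => h'; lia.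
Qed.

Lemma index_Dec n i c : i <= n -> 1 <= c <= n -> index c (Dec n i) = (dec n i c).-1.
Proof.
move=> hi hc.
have := dec_range hi hc => hr.
have hlt : (dec n i c).-1 < n by lia.
have : nth 0 (Dec n i) (dec n i c).-1 = c.
  rewrite nth_Dec // prednK ?dec_inv //; lia.
move=> e; rewrite -{1}e index_uniq ?size_Dec //; exact: uniq_Dec.
Qed.

Lemma dec_fact n i k : (k <= i /\ dec n i k = i.+1 - k) \/ (i < k /\ dec n i k = n + i.+1 - k).
Proof. rewrite /dec; case: ifP => h; [left|right]; split => //; lia. Qed.

Lemma occ_fact n i c k : i <= n ->
  let o := occ n (St (Dec n i) c) k in
  (o = 0 /\ (k = 0 \/ n < k \/ c <= dec n i k)) \/
  (o = dec n i k /\ 1 <= k <= n /\ dec n i k < c).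
Proof.
move=> hi /=; rewrite /occ; case: ifP => h; last by left; split => //; lia.
rewrite /St (nth_map 0); last by rewrite size_Dec //; lia.
rewrite nth_Dec //; last lia. rewrite prednK; last lia.
case: ifP => h2; [right|left]; split => //; lia.
Qed.


Ltac facts n i c k hi :=
  have := occ_fact c k.-1 hi; have := occ_fact c k hi; have := occ_fact c k.+1 hi;
  have := dec_fact n i k.-1; have:= dec_fact n i k; have := dec_fact n i k.+1;
  rewrite /=.

Ltac dstr := repeat (match goal with
  | |- (_ /\ _) \/ (_ /\ _) -> _ =>
      case => [[? ?]|[? ?]]; try (exfalso; lia)
  end).

Lemma av_tgt n i c : 4 <= n -> 1 <= i <= n -> 1 <= c <= n ->
  available (cycle_graph n) n (St (Dec n i) c) c (dec n i c).
Proof.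
move=> h4 hi hc; have hi' : i <= n by lia.
facts n i c (dec n i c) hi'.
have := dec_fact n i c.
dstr.
all: rewrite /available /cycle_graph.
all: lia.
Qed.

Lemma av_prev n i c : 4 <= n -> 1 <= i <= n -> 1 <= c <= n ->
  (c <= n - 2 \/ (i = n - 1 /\ c <= n - 1) \/ i = n) -> 2 <= dec n i c ->
  available (cycle_graph n) n (St (Dec n i) c) c (dec n i c).-1.
Proof.
move=> h4 hi hc hh h2; have hi' : i <= n by lia.
facts n i c (dec n i c).-1 hi'.
have := dec_fact n i c.
dstr.
all: rewrite /available /cycle_graph.
all: lia.
Qed.

Lemma nav_all n i c k : 4 <= n -> 1 <= i <= n -> 1 <= c <= n ->
  ((i <= n - 2 /\ c = n - 1) \/ c = n) -> 1 <= k < dec n i c ->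
  ~~ available (cycle_graph n) n (St (Dec n i) c) c k.
Proof.
move=> h4 hi hc hh hk; have hi' : i <= n by lia.
facts n i c k hi'.
have := dec_fact n i c.
dstr.
all: rewrite /available /cycle_graph.
all: lia.
Qed.

Lemma blocker_self G pi j : j \in pi -> blocker G pi j (index j pi).+1.
Proof. by move=> jin; rewrite /blocker /entry /= nth_index // leqnn. Qed.

Lemma rev_iota2 q : rev (iota 1 q.+2) = q.+2 :: q.+1 :: rev (iota 1 q).
Proof. by rewrite -(addn2 q) iotaD rev_cat /= add1n addn2. Qed.

Lemma bs_short G pi j : j \in pi ->
  ((index j pi).+1 = 1 \/ ~~ blocker G pi j (index j pi)) ->
  blocking_seq j pi G = [:: j].
Proof.
move=> jin hh; rewrite /blocking_seq.
have hlt : index j pi < size pi by rewrite index_mem.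
have -> : find (fun k => ~~ blocker G pi j k) (rev (iota 1 (index j pi).+1)) = 1.
  case: hh => [e|nb].
    have b1 := blocker_self G jin; have e0 : index j pi = 0 by case: e.
    by rewrite e0 in b1 *; rewrite /= b1.
  have b1 := blocker_self G jin.
  move: nb b1; case E: (index j pi) => [|q] nb b1; first by rewrite /= b1.
  by rewrite rev_iota2 /= b1 nb.
rewrite subn1 /= (take_nth 0) // -cats1 drop_size_cat ?size_take ?hlt // nth_index //.
Qed.

Lemma bs_long G pi j : j \in pi ->
  (forall k, 1 <= k <= (index j pi).+1 -> blocker G pi j k) ->
  blocking_seq j pi G = take (index j pi).+1 pi.
Proof.
move=> jin hb; rewrite /blocking_seq.
have -> : find (fun k => ~~ blocker G pi j k) (rev (iota 1 (index j pi).+1)) = (index j pi).+1.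
  have : ~~ has (fun k => ~~ blocker G pi j k) (rev (iota 1 (index j pi).+1)).
    apply/hasPn => k; rewrite mem_rev mem_iota => hk; rewrite negbK; apply: hb; lia.
  rewrite has_find size_rev size_iota -leqNgt => h; apply/eqP; rewrite eqn_leq h andbT.
  by have := find_size (fun k => ~~ blocker G pi j k) (rev (iota 1 (index j pi).+1)); rewrite size_rev size_iota.
by rewrite subnn drop0.
Qed.

Lemma has_nbrs (P : pred nat) pi k : has P (nbrs pi k) =
  ((0 < k.-1 <= size pi) && P (entry pi k.-1)) || ((0 < k.+1 <= size pi) && P (entry pi k.+1)).
Proof.
rewrite /nbrs /=.
by case: (0 < k.-1 <= size pi); case: (k < size pi) => //=; rewrite ?orbF.
Qed.

Lemma entry_fact n i k : i <= n ->
  (1 <= k <= n /\ entry (Dec n i) k = dec n i k) \/ ((k = 0 \/ n < k) /\ True).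
Proof.
move=> hi; case: (boolP (1 <= k <= n)) => h; last by right; split => //; lia.
left; split => //; rewrite /entry nth_Dec //; last lia.
by rewrite prednK //; lia.
Qed.

Ltac efacts n i k hi :=
  have := entry_fact k.-1 hi; have := entry_fact k hi; have := entry_fact k.+1 hi;
  have := dec_fact n i k.-1; have:= dec_fact n i k; have := dec_fact n i k.+1.

Lemma nblk n i j : 4 <= n -> 1 <= i <= n -> 1 <= j <= n ->
  (j <= n - 2 \/ (i = n - 1 /\ j <= n - 1) \/ i = n) -> 2 <= dec n i j ->
  ~~ blocker (cycle_graph n) (Dec n i) j (dec n i j).-1.
Proof.
move=> h4 hi hj hh h2; have hi' : i <= n by lia.
efacts n i (dec n i j).-1 hi'.
have := dec_fact n i j.
dstr.
all: rewrite /blocker has_nbrs size_Dec // /cycle_graph.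
all: lia.
Qed.

Lemma blk_all n i j k : 4 <= n -> 1 <= i <= n -> 1 <= j <= n ->
  ((i <= n - 2 /\ j = n - 1) \/ j = n) -> 1 <= k <= dec n i j ->
  blocker (cycle_graph n) (Dec n i) j k.
Proof.
move=> h4 hi hj hh hk; have hi' : i <= n by lia.
efacts n i k hi'.
have := dec_fact n i j.
dstr.
all: rewrite /blocker has_nbrs size_Dec // /cycle_graph.
all: lia.
Qed.

Lemma memD n i : i <= n -> forall x, (x \in Dec n i) = (0 < x <= n).
Proof. by move=> hi x; rewrite mem_Dec. Qed.

Lemma idxD n i c : i <= n -> 1 <= c <= n -> (index c (Dec n i)).+1 = dec n i c.
Proof.
move=> hi hc; rewrite index_Dec //; have := dec_range hi hc; lia.
Qed.

Lemma card_one n i (x : 'I_n) : 4 <= n -> 1 <= i <= n ->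
  (x.+1 <= n - 2 \/ (i = n - 1 /\ x.+1 <= n - 1) \/ i = n) ->
  #|goodset (cycle_graph n) (Dec n i) x| = 1.
Proof.
move=> h4 hi hh; have hi' : i <= n by lia.
have hx : 1 <= x.+1 <= n by have := ltn_ord x; lia.
have hr := dec_range hi' hx.
rewrite (@goodset_card (cycle_graph n) n (Dec n i) x (dec n i x.+1) (dec n i x.+1)).
- lia.
- by rewrite idxD.
- lia.
- lia.
- by apply: av_tgt => //; lia.
- by move=> k; lia.
case: (ltnP 1 (dec n i x.+1)) => h; last by left; lia.
right; apply: av_prev => //; lia.
Qed.

Lemma card_all n i (x : 'I_n) : 4 <= n -> 1 <= i <= n ->
  ((i <= n - 2 /\ x.+1 = n - 1) \/ x.+1 = n) ->
  #|goodset (cycle_graph n) (Dec n i) x| = dec n i x.+1.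
Proof.
move=> h4 hi hh; have hi' : i <= n by lia.
have hx : 1 <= x.+1 <= n by have := ltn_ord x; lia.
have hr := dec_range hi' hx.
rewrite (@goodset_card (cycle_graph n) n (Dec n i) x (dec n i x.+1) 1).
- lia.
- by rewrite idxD.
- lia.
- lia.
- by apply: av_tgt => //; lia.
- by move=> k hk; apply: nav_all => //; lia.
- by left.
Qed.

Lemma foldr_ones (h : nat -> nat) s a : (forall t, t \in s -> h t = 1) ->
  foldr muln a (map h s) = a.
Proof.
elim: s => [|x s IH] //= H; rewrite H ?mem_head // mul1n IH // => t ht.
by apply: H; rewrite in_cons ht orbT.
Qed.

Lemma rev_iota2a a q : rev (iota a q.+2) = (a + q).+1 :: a + q :: rev (iota a q).
Proof. by rewrite -(addn2 q) iotaD rev_cat /=. Qed.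

Lemma take_Dec1 n i : 1 <= i <= n - 2 -> take i.+2 (Dec n i) = rev (iota 1 i) ++ [:: n; n - 1].
Proof.
move=> hi; rewrite /Dec.
have e : n - i = (n - i - 2).+2 by lia.
rewrite e rev_iota2a take_cat size_rev size_iota.
have -> : (i.+2 < i) = false by lia.
have -> : i.+2 - i = 2 by lia.
have -> : (i.+1 + (n - i - 2)).+1 = n by lia.
have -> : i.+1 + (n - i - 2) = n - 1 by lia.
by rewrite /= take0.
Qed.

Lemma take_Dec2 n i : 1 <= i <= n - 2 -> take i.+1 (Dec n i) = rev (iota 1 i) ++ [:: n].
Proof.
move=> hi; rewrite /Dec.
have e : n - i = (n - i - 2).+2 by lia.
rewrite e rev_iota2a take_cat size_rev size_iota.
have -> : (i.+1 < i) = false by lia.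
have -> : i.+1 - i = 1 by lia.
have -> : (i.+1 + (n - i - 2)).+1 = n by lia.
by [].
Qed.

Lemma Dec_n1 n : 1 <= n -> Dec n (n - 1) = rev (iota 1 (n - 1)) ++ [:: n].
Proof.
move=> hn; rewrite /Dec.
have -> : n - (n - 1) = 1 by lia.
have -> : (n - 1).+1 = n by lia.
by [].
Qed.

Lemma short_bs n i j : 4 <= n -> 1 <= i <= n -> 1 <= j <= n ->
  (j <= n - 2 \/ (i = n - 1 /\ j <= n - 1) \/ i = n) ->
  blocking_seq j (Dec n i) (cycle_graph n) = [:: j].
Proof.
move=> h4 hi hj hh; have hi' : i <= n by lia.
apply: bs_short; first by rewrite mem_Dec.
rewrite idxD // index_Dec //.
have := dec_range hi' hj => hr.
case: (ltnP 1 (dec n i j)) => h; last by left; lia.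
by right; apply: nblk => //; lia.
Qed.

Lemma prod_eq n (h : nat -> nat) (g : 'I_n -> nat) :
  (forall x : 'I_n, g x = h x) -> foldr muln 1 [seq g x | x : 'I_n] = foldr muln 1 (map h (iota 0 n)).
Proof.
move=> H; have -> : [seq g x | x : 'I_n] = [seq h (val x) | x : 'I_n] by apply: eq_map.
by rewrite -val_enum_ord -map_comp.
Qed.

Unset Implicit Arguments.

Theorem proposition2p8 (n : nat) : 4 <= n ->
  (forall i, 1 <= i <= n - 2 ->
     [/\ (forall j, 1 <= j <= n - 2 ->
            blocking_seq j (Dec n i) (cycle_graph n) = [:: j]),
         blocking_seq (n - 1) (Dec n i) (cycle_graph n) = rev (iota 1 i) ++ [:: n; n - 1],
         blocking_seq n (Dec n i) (cycle_graph n) = rev (iota 1 i) ++ [:: n] &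
         num_fpf (cycle_graph n) n (Dec n i) = (i + 1) * (i + 2)])
  /\
  [/\ (forall j, 1 <= j <= n - 1 ->
         blocking_seq j (Dec n (n - 1)) (cycle_graph n) = [:: j]),
      blocking_seq n (Dec n (n - 1)) (cycle_graph n) = rev (iota 1 (n - 1)) ++ [:: n] &
      num_fpf (cycle_graph n) n (Dec n (n - 1)) = n]
  /\
  ((forall j, 1 <= j <= n ->
      blocking_seq j (Dec n n) (cycle_graph n) = [:: j]) /\
   num_fpf (cycle_graph n) n (Dec n n) = 1).
Proof.
move=> h4; split; [|split].
- move=> i hi; have hi' : i <= n by lia.
  have hi1 : 1 <= i <= n by lia.
  have d1 : dec n i (n - 1) = i.+2 by rewrite /dec; case: ifP; lia.
  have d2 : dec n i n = i.+1 by rewrite /dec; case: ifP; lia.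
  split.
  + move=> j hj; apply: short_bs => //; lia.
  + rewrite bs_long.
    * rewrite idxD //; last lia.
      by rewrite d1 take_Dec1.
    * by rewrite mem_Dec //; lia.
    move=> k; rewrite idxD //; last lia.
    by move=> hk; apply: blk_all => //; lia.
  + rewrite bs_long.
    * rewrite idxD //; last lia.
      by rewrite d2 take_Dec2.
    * by rewrite mem_Dec //; lia.
    move=> k; rewrite idxD //; last lia.
    by move=> hk; apply: blk_all => //; lia.
  rewrite (num_fpf_eq (cycle_graph n) (uniq_Dec hi') (size_Dec hi') (memD hi')).
  rewrite (@prod_eq n (fun t => if t < n - 2 then 1 else if t == n - 2 then i.+2 else i.+1)).
    have -> : iota 0 n = iota 0 (n - 2) ++ iota (n - 2) 2 by rewrite -iotaD; congr iota; lia.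
    rewrite map_cat foldr_cat foldr_ones; last by move=> t; rewrite mem_iota => ht; rewrite ifT //; lia.
    rewrite /= ltnn eqxx.
    have -> : (n - 2).+1 < n - 2 = false by lia.
    have -> : ((n - 2).+1 == n - 2) = false by lia.
    lia.
  move=> x; have hx := ltn_ord x.
  case: (ltnP x (n - 2)) => h1.
    by rewrite card_one //; lia.
  case: (nat_of_ord x =P n - 2) => h2.
    rewrite card_all //; last lia.
    by have -> : x.+1 = n - 1 by lia.
  rewrite card_all //; last lia.
  by have -> : x.+1 = n by lia.
- have hi' : n - 1 <= n by lia.
  have hi1 : 1 <= n - 1 <= n by lia.
  have d2 : dec n (n - 1) n = n by rewrite /dec; case: ifP; lia.
  split.
  + move=> j hj; apply: short_bs => //; lia.
  + rewrite bs_long.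
    * rewrite idxD //; last lia.
      by rewrite d2 -{1}(size_Dec hi') take_size Dec_n1 //; lia.
    * by rewrite mem_Dec //; lia.
    move=> k; rewrite idxD //; last lia.
    by move=> hk; apply: blk_all => //; lia.
  rewrite (num_fpf_eq (cycle_graph n) (uniq_Dec hi') (size_Dec hi') (memD hi')).
  rewrite (@prod_eq n (fun t => if t < n - 1 then 1 else n)).
    have -> : iota 0 n = iota 0 (n - 1) ++ iota (n - 1) 1 by rewrite -iotaD; congr iota; lia.
    rewrite map_cat foldr_cat foldr_ones; last by move=> t; rewrite mem_iota => ht; rewrite ifT //; lia.
    rewrite /= ltnn; lia.
  move=> x; have hx := ltn_ord x.
  case: (ltnP x (n - 1)) => h1.
    by rewrite card_one //; lia.
  rewrite card_all //; last lia.
  by have -> : x.+1 = n by lia.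
- have hi' : n <= n by [].
  have hi1 : 1 <= n <= n by lia.
  split.
  + move=> j hj; apply: short_bs => //; lia.
  rewrite (num_fpf_eq (cycle_graph n) (uniq_Dec hi') (size_Dec hi') (memD hi')).
  rewrite (@prod_eq n (fun t => 1)); first by rewrite foldr_ones.
  by move=> x; rewrite card_one //; lia.
Qed.
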